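(* Let $G$ be a finite group and $H\subseteq G$ a subgroup which possesses a complete mapping. Let $H\backslash G/H$ denote the set of double cosets $HxH$ ($x\in G$). Suppose $\phi$ and $\psi$ are permutations of $H\backslash G/H$ such that for every $D\in H\backslash G/H$ we have $|D|=|\phi(D)|=|\psi(D)|$ and $D\,\phi(D)\supseteq\psi(D)$ (where $D\,\phi(D)$ is the set of products $gg'$ with $g\in D$, $g'\in\phi(D)$). Then $G$ possesses a complete mapping.
   Context: A complete mapping of a group $G$ is a bijection $\phi:G\to G$ such that $g\mapsto g\phi(g)$ is also a bijection of $G$; equivalently, there are an index set $I$ and bijections $a,b,c:I\to G$ with $a(i)b(i)=c(i)$ for all $i\in I$. *)

(* Defs.v *)
From mathcomp Require Import all_boot all_fingroup.
Set Implicit Arguments. Unset Strict Implicit. Unset Printing Implicit Defensive.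
Local Open Scope group_scope.

(* For finite K, a map K -> K that is
   injective on K is a bijection of K; x * f x automatically lies in K. *)
Definition has_complete_mapping (gT : finGroupType) (K : {group gT}) : Prop :=
  exists f : gT -> gT,
    [/\ {in K, forall x, f x \in K},
        {in K &, injective f} &
        {in K &, injective (fun x => x * f x)}].

Definition double_cosets (gT : finGroupType) (H G : {set gT}) : {set {set gT}} :=
  [set (H :* x) * H | x in G].

Definition is_perm_on (T : finType) (S : {set T}) (phi : T -> T) : Prop :=
  {in S, forall D, phi D \in S} /\ {in S &, injective phi}.

(* Main.v *)
Require Import Defs.
From mathcomp Require Import all_boot all_fingroup.
From mathcomp Require Import zify.
From Stdlib Require Import ClassicalEpsilon.
Set Implicit Arguments. Unset Strict Implicit. Unset Printing Implicit Defensive.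
Lemma bigcup_setD1 (T U : finType) (N : T -> {set U}) (S : {set T}) (u : U) :
  \bigcup_(t in S) (N t :\ u) = (\bigcup_(t in S) N t) :\ u.
Proof.
apply/setP=> y; rewrite in_setD1; apply/bigcupP/andP.
  by case=> t tS; rewrite in_setD1 => /andP[yu yN]; split=> //; apply/bigcupP; exists t.
by case=> yu /bigcupP[t tS yN]; exists t => //; rewrite in_setD1 yu.
Qed.

Lemma bigcup_setD (T U : finType) (N : T -> {set U}) (S : {set T}) (M : {set U}) :
  \bigcup_(t in S) (N t :\: M) = (\bigcup_(t in S) N t) :\: M.
Proof.
apply/setP=> y; rewrite in_setD; apply/bigcupP/andP.
  by case=> t tS; rewrite in_setD => /andP[yu yN]; split=> //; apply/bigcupP; exists t.
by case=> yu /bigcupP[t tS yN]; exists t => //; rewrite in_setD yu.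
Qed.

Lemma hall (T U : finType) (u0 : U) (N : T -> {set U}) (A : {set T}) :
  (forall S : {set T}, S \subset A -> #|S| <= #|\bigcup_(t in S) N t|) ->
  exists g : T -> U, {in A, forall t, g t \in N t} /\ {in A &, injective g}.
Proof.
move: {2}#|A| (leqnn #|A|) => n; elim: n N A => [|n IH] N A leA hallC.
  have A0 : A = set0 by apply/eqP; rewrite -cards_eq0 -leqn0.
  by exists (fun _ => u0); split=> t; rewrite A0 inE.
case: (boolP [exists S0 : {set T}, [&& S0 \proper A, S0 != set0 &
          #|\bigcup_(t in S0) N t| <= #|S0|]]).
- case/existsP=> S0 /and3P[pS0A S0n0 tight].
  have sS0A : S0 \subset A by apply: proper_sub.
  have ltS0 : #|S0| < #|A| by apply: proper_card.
  have [g1 [g1N g1inj]] : exists g : T -> U,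
      {in S0, forall t, g t \in N t} /\ {in S0 &, injective g}.
    apply: IH; first by rewrite -ltnS (leq_trans ltS0).
    by move=> S sS; apply: hallC; apply: subset_trans sS sS0A.
  set M := \bigcup_(t in S0) N t.
  have [g2 [g2N g2inj]] : exists g : T -> U,
      {in A :\: S0, forall t, g t \in N t :\: M} /\ {in A :\: S0 &, injective g}.
    apply: IH.
      have S0pos : 0 < #|S0| by rewrite lt0n cards_eq0.
      by move: leA ltS0 S0pos; rewrite cardsD (setIidPr sS0A); lia.
    move=> S sS; rewrite bigcup_setD.
    have dis : [disjoint S & S0].
      rewrite -setI_eq0; apply/eqP/setP=> t; rewrite !inE.
      by apply/negbTE; apply/andP=> -[tS tS0]; move/subsetP: sS => /(_ t tS); rewrite inE tS0.
    have sSS0 : S :|: S0 \subset A.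
      by rewrite subUset sS0A andbT; apply: subset_trans sS (subsetDl _ _).
    have := hallC _ sSS0; rewrite bigcup_setU -/M.
    have -> : #|S :|: S0| = #|S| + #|S0|.
      by rewrite cardsU (disjoint_setI0 dis) cards0 subn0.
    move=> h.
    have -> : #|(\bigcup_(t in S) N t) :\: M| = #|(\bigcup_(t in S) N t) :|: M| - #|M|.
      by rewrite -cardsDS ?subsetUr // setDUl setDv setU0.
    move: h tight; rewrite -/M; set X := \bigcup_(i in S) N i; lia.
  exists (fun t => if t \in S0 then g1 t else g2 t); split.
    move=> t tA; case: ifP => tS0; first exact: g1N.
    have : t \in A :\: S0 by rewrite inE tS0 tA.
    by move/g2N; rewrite inE => /andP[].
  move=> t t' tA t'A /=; case: ifP => tS0; case: ifP => t'S0.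
  + exact: g1inj.
  + move=> e; have : t' \in A :\: S0 by rewrite inE t'S0 t'A.
    move/g2N; rewrite inE -e => /andP[/negP[]]; apply/bigcupP; exists t => //; exact: g1N.
  + move=> e; have : t \in A :\: S0 by rewrite inE tS0 tA.
    move/g2N; rewrite inE e => /andP[/negP[]]; apply/bigcupP; exists t' => //; exact: g1N.
  + by apply: g2inj; rewrite inE ?tS0 ?t'S0 ?tA ?t'A.
move=> notight.
have [A0|[a aA]] := set_0Vmem A.
  by exists (fun _ => u0); split=> t; rewrite A0 inE.
have : #|[set a]| <= #|\bigcup_(t in [set a]) N t| by apply: hallC; rewrite sub1set.
rewrite big_set1 cards1 card_gt0 => /set0Pn[u uNa].
have [g' [g'N g'inj]] : exists g : T -> U,
    {in A :\ a, forall t, g t \in N t :\ u} /\ {in A :\ a &, injective g}.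
  apply: IH; first by move: leA; rewrite (cardsD1 a A) aA; lia.
  move=> S sS; have [->|Sn0] := eqVneq S set0; first by rewrite cards0.
  rewrite bigcup_setD1.
  have pSA : S \proper A.
    rewrite properEneq (subset_trans sS (subsetDl _ _)) andbT.
    apply/eqP=> SA; move/subsetP: sS => /(_ a); rewrite SA aA !inE eqxx /=.
    by move/(_ isT).
  have : #|S| < #|\bigcup_(t in S) N t|.
    rewrite ltnNge; apply/negP=> le; case/negP: notight.
    by apply/existsP; exists S; rewrite pSA Sn0 le.
  move: (cardsD1 u (\bigcup_(t in S) N t)); set X := \bigcup_(t in S) N t.
  case: (u \in X); lia.
exists (fun t => if t == a then u else g' t); split.
  move=> t tA; case: eqP => [->//|/eqP ta].
  by have := g'N t; rewrite !inE ta tA => /(_ isT) /andP[].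
move=> t t' tA t'A /=; case: eqP => [->|/eqP ta]; case: eqP => [->//|/eqP t'a].
+ move=> e; have := g'N t'; rewrite !inE t'a t'A -e eqxx /=.
  by move/(_ isT).
+ move=> e; have := g'N t; rewrite !inE ta tA e eqxx /=.
  by move/(_ isT).
+ by apply: g'inj; rewrite !inE ?ta ?t'a ?tA ?t'A.
Qed.
Section Basics.
Variables (gT : finGroupType) (H : {group gT}).
Local Open Scope group_scope.

Definition dc (x : gT) : {set gT} := (H :* x) * H.

Lemma mem_dc y x :
  reflect (exists a, exists2 b, (a \in H) && (b \in H) & y = a * x * b) (y \in dc x).
Proof.
apply: (iffP mulsgP) => [[ax b /rcosetP[a aH ->] bH ->] | [a [b /andP[aH bH] ->]]].
  by exists a; exists b; rewrite ?aH ?bH.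
by exists (a * x) b => //; apply/rcosetP; exists a.
Qed.

Lemma dc_refl x : x \in dc x.
Proof. by apply/mem_dc; exists 1; exists 1; rewrite ?group1 ?mul1g ?mulg1. Qed.

Lemma dc_eq x y : y \in dc x -> dc y = dc x.
Proof.
case/mem_dc=> a [b /andP[aH bH] ->]; apply/setP=> t; apply/mem_dc/mem_dc.
  case=> c [d /andP[cH dH] ->]; exists (c * a); exists (b * d); first by rewrite !groupM.
  by rewrite !mulgA.
case=> c [d /andP[cH dH] ->]; exists (c * a^-1); exists (b^-1 * d); first by rewrite !groupM ?groupV.
by rewrite !mulgA mulgKV mulgK.
Qed.

Lemma dcL a x y : a \in H -> y \in dc x -> a * y \in dc x.
Proof.
move=> aH /mem_dc[c [d /andP[cH dH] ->]]; apply/mem_dc; exists (a * c); exists d.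
  by rewrite groupM. by rewrite !mulgA.
Qed.

Lemma dcR a x y : a \in H -> y \in dc x -> y * a \in dc x.
Proof.
move=> aH /mem_dc[c [d /andP[cH dH] ->]]; apply/mem_dc; exists c; exists (d * a).
  by rewrite cH groupM. by rewrite !mulgA.
Qed.

Lemma dcL_eq a x y : a \in H -> (a * y \in dc x) = (y \in dc x).
Proof.
move=> aH; apply/idP/idP; last exact: dcL.
by move/(dcL (groupVr aH)); rewrite mulKg.
Qed.

Lemma dcR_eq a x y : a \in H -> (y * a \in dc x) = (y \in dc x).
Proof.
move=> aH; apply/idP/idP; last exact: dcR.
by move/(dcR (groupVr aH)); rewrite mulgK.
Qed.

Definition rrep (d : gT) := repr (H :* d).
Definition crep (e : gT) := repr (e *: H).

Lemma rrep_mem d : rrep d \in H :* d.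
Proof. exact: mem_repr_rcoset. Qed.

Lemma rrep_H d : d * (rrep d)^-1 \in H.
Proof. by case/rcosetP: (rrep_mem d) => h hH ->; rewrite invMg mulKVg groupV. Qed.

Lemma rrepM a d : a \in H -> rrep (a * d) = rrep d.
Proof. by move=> aH; rewrite /rrep rcosetM (rcoset_id aH). Qed.

Lemma rrepK d : rrep (rrep d) = rrep d.
Proof. by rewrite /rrep rcoset_repr. Qed.

Lemma crep_mem e : crep e \in e *: H.
Proof. by apply: (mem_repr e); apply/lcosetP; exists 1; rewrite ?mulg1. Qed.

Lemma crep_H e : (crep e)^-1 * e \in H.
Proof. by case/lcosetP: (crep_mem e) => h hH ->; rewrite invMg mulgKV groupV. Qed.

Lemma crepK e : crep (crep e) = crep e.
Proof.
rewrite /crep; congr repr.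
by case/lcosetP: (crep_mem e) => h hH; rewrite /crep => ->; rewrite lcosetM (lcoset_id hH).
Qed.

End Basics.

Section LocalMatch.
Variables (gT : finGroupType) (H : {group gT}).
Local Open Scope group_scope.
Local Notation dc := (dc H).
Local Notation rrep := (rrep H).
Local Notation crep := (crep H).

Lemma rrep_dc x d : d \in dc x -> rrep d \in dc x.
Proof. by move=> dD; case/rcosetP: (rrep_mem H d) => h hH ->; apply: dcL. Qed.

Lemma crep_dc y e : e \in dc y -> crep e \in dc y.
Proof. by move=> eE; case/lcosetP: (crep_mem H e) => h hH ->; apply: dcR. Qed.

Lemma inj_of_card (T U : finType) (u0 : U) (A : {set T}) (B : {set U}) :
  #|A| <= #|B| -> exists g : T -> U, {in A, forall t, g t \in B} /\ {in A &, injective g}.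
Proof.
move=> le; apply: (hall u0) => S sSA.
have [->|[t tS]] := set_0Vmem S; first by rewrite cards0.
apply: leq_trans (subset_leq_card sSA) (leq_trans le _).
by apply: subset_leq_card; apply/subsetP=> u uB; apply/bigcupP; exists t.
Qed.

Lemma local_match (x y w : gT) :
  #|dc x| = #|dc y| -> dc w \subset dc x * dc y ->
  exists s : gT -> gT,
    {in [set rrep d | d in dc x], forall r,
        s r \in [set s0 in [set crep e | e in dc y] | r * s0 \in dc w]} /\
    {in [set rrep d | d in dc x] &, injective s}.
Proof.
move=> cardDE sFDE.
set D := dc x; set E := dc y; set F := dc w.
pose kap (d : gT) := \sum_(e in E) ((d * e)%g \in F).
pose kap' (e : gT) := \sum_(d in D) ((d * e)%g \in F).
have kapE d a b : a \in H -> b \in H -> kap (a * d * b) = kap d.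
  move=> aH bH; rewrite /kap (reindex_inj (mulgI b^-1)) /=.
  apply: eq_big => e; first by rewrite /E dcL_eq ?groupV.
  by move=> _; rewrite mulgA mulgK -mulgA dcL_eq.
have kap'E e a b : a \in H -> b \in H -> kap' (a * e * b) = kap' e.
  move=> aH bH; rewrite /kap' (reindex_inj (mulIg a^-1)) /=.
  apply: eq_big => d; first by rewrite /D dcR_eq ?groupV.
  by move=> _; rewrite mulgA mulgA (mulgKV a) dcR_eq.
have kapD d : d \in D -> kap d = kap x.
  by case/mem_dc=> a [b /andP[aH bH] ->]; apply: kapE.
have kap'D e : e \in E -> kap' e = kap' y.
  by case/mem_dc=> a [b /andP[aH bH] ->]; apply: kap'E.
have sumDE : \sum_(d in D) kap d = \sum_(e in E) kap' e.
  by rewrite /kap /kap' exchange_big.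
have kk : kap x = kap' y.
  move: sumDE; rewrite (eq_bigr _ kapD) (eq_bigr _ kap'D) !sum_nat_const -/D -/E cardDE.
  have : 0 < #|E| by apply/card_gt0P; exists y; apply: dc_refl.
  by move=> Epos /eqP; rewrite eqn_mul2l eqn0Ngt Epos => /eqP.
have kpos : 0 < kap x.
  have : w \in D * E by apply: (subsetP sFDE); apply: dc_refl.
  case/mulsgP=> d e dD eE we; rewrite -(kapD d dD) /kap (bigD1 e) //= -we.
  by rewrite (_ : w \in F) //; apply: dc_refl.
pose Rows := [set rrep d | d in D]; pose Cols := [set crep e | e in E].
have rowK r : r \in Rows -> rrep r = r by case/imsetP=> d _ ->; apply: rrepK.
have rowD r : r \in Rows -> r \in D by case/imsetP=> d dD ->; apply: rrep_dc.
apply: (hall 1) => S sS.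
set NS := \bigcup_(r in S) _.
pose U := [set d in D | rrep d \in S].
pose V := [set e in E | [exists d in U, (d * e)%g \in F]].
have h1 : #|S| * #|H| <= #|U|.
  rewrite -cardsX -(card_in_imset (f := fun p : gT * gT => p.2 * p.1)).
    apply: subset_leq_card; apply/subsetP=> _ /imsetP[[r h] /setXP[rS hH] ->] /=.
    have rR := subsetP sS r rS.
    by rewrite inE dcL ?rowD //= (rrepM _ hH) rowK.
  move=> [r h] [r' h'] /setXP[rS hH] /setXP[r'S h'H] /= e.
  have rR := subsetP sS r rS; have r'R := subsetP sS r' r'S.
  have err : r = r'.
    by rewrite -(rowK r rR) -(rowK r' r'R) -(rrepM _ hH) e (rrepM _ h'H).
  by move: e; rewrite err => /mulIg ->.
have h2 : #|V| <= #|NS| * #|H|.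
  rewrite -cardsX; apply: leq_trans (leq_imset_card (fun p : gT * gT => p.1 * p.2) _).
  apply: subset_leq_card; apply/subsetP=> e /setIdP[eE /existsP[d /andP[dU deF]]].
  have dD : d \in D by move: dU; rewrite inE => /andP[].
  apply/imsetP; exists (crep e, (crep e)^-1 * e); last by rewrite /= mulKVg.
  rewrite inE crep_H andbT; apply/bigcupP; exists (rrep d).
    by move: dU; rewrite inE => /andP[].
  rewrite inE /= imset_f //=.
  have -> : rrep d * crep e = (d * (rrep d)^-1)^-1 * (d * e) * ((crep e)^-1 * e)^-1.
    by rewrite !invMg !invgK !mulgA mulgKV mulgK.
  by rewrite dcR_eq ?groupV ?crep_H // dcL_eq ?groupV ?rrep_H.
have h3 : #|U| <= #|V|.
  have sUD : U \subset D by apply/subsetP=> d; rewrite inE => /andP[].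
  have sVE : V \subset E by apply/subsetP=> e; rewrite inE => /andP[].
  have : #|U| * kap x <= #|V| * kap x.
    rewrite -!sum_nat_const.
    have -> : \sum_(d in U) kap x = \sum_(d in U) kap d.
      by apply: eq_bigr => d /(subsetP sUD) /kapD ->.
    rewrite /kap exchange_big /= (big_setID V) /= (setIidPr sVE).
    rewrite [X in _ + X <= _]big1 ?addn0; last first.
      move=> e; rewrite inE => /andP[eV eE]; apply: big1 => d dU.
      case: (boolP ((d * e)%g \in F)) => // deF; case/negP: eV.
      by rewrite inE eE; apply/existsP; exists d; rewrite dU deF.
    apply: leq_sum => e eV; rewrite -/(kap x) kk -(kap'D e (subsetP sVE e eV)) /kap'.
    by rewrite [X in _ <= X](big_setID U) /= (setIidPr sUD) leq_addr.
  by rewrite leq_pmul2r.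
rewrite -(@leq_pmul2r #|H|) ?cardG_gt0 //.
by apply: leq_trans h1 (leq_trans h3 h2).
Qed.

End LocalMatch.

Section Lambda.
Variables (gT : finGroupType) (H : {group gT}).
Local Open Scope group_scope.
Local Notation dc := (dc H).
Local Notation rrep := (rrep H).

Lemma conj_C (z c : gT) : c \in H :&: H :^ z^-1 -> c ^ z \in H :&: H :^ z.
Proof. by rewrite !inE mem_conjgV memJ_conjg => /andP[-> ->]. Qed.

Lemma card_CC' (z : gT) : #|H :&: H :^ z^-1| = #|H :&: H :^ z|.
Proof. by rewrite -(cardJg _ z) conjIg conjsgKV setIC. Qed.

Lemma rcoset_repr_mem (K : {group gT}) X : K \subset H -> X \in rcosets K H ->
  [/\ repr X \in H, K :* repr X = X & repr X \in X].
Proof.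
move=> sKH /imsetP[y yH ->]; rewrite rcosetE rcoset_repr mem_repr_rcoset; split=> //.
by case/rcosetP: (mem_repr_rcoset K y) => k kK ->; apply: groupM => //; apply: (subsetP sKH).
Qed.

Lemma Lambda_ex (z : gT) : exists L : gT -> gT,
  [/\ {in H, forall q, L q \in H}, {in H &, injective L} &
      {in H :&: H :^ z^-1, forall c, {in H, forall q, L (c * q) = c ^ z * L q}}].
Proof.
pose C := (H :&: H :^ z^-1)%G; pose C' := (H :&: H :^ z)%G.
have sCH : C \subset H by apply: subsetIl.
have sC'H : C' \subset H by apply: subsetIl.
have idx : #|H : C| <= #|H : C'|.
  have e1 := Lagrange sCH; have e2 := Lagrange sC'H.
  have : (#|C| * #|H : C| = #|C| * #|H : C'|)%N by rewrite e1 /= card_CC' e2.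
  by move/eqP; rewrite eqn_mul2l (negbTE (lt0n_neq0 (cardG_gt0 C))) /= => /eqP ->.
have [tau [tauB tauI]] := inj_of_card set0 idx.
pose L q := (q * (repr (C :* q))^-1) ^ z * repr (tau (C :* q)).
have CqR q : q \in H -> C :* q \in rcosets C H by move=> qH; rewrite -rcosetE imset_f.
have rhoC q : q * (repr (C :* q))^-1 \in C.
  by case/rcosetP: (mem_repr_rcoset C q) => c cC ->; rewrite invMg mulKVg groupV.
have rhoC' q : (q * (repr (C :* q))^-1) ^ z \in C' by apply: conj_C; apply: rhoC.
have LC' q : q \in H -> C' :* L q = tau (C :* q).
  move=> qH; rewrite /L rcosetM (rcoset_id (rhoC' q)).
  by case: (rcoset_repr_mem sC'H (tauB _ (CqR q qH))).
exists L; split.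
- move=> q qH; apply: groupM; first exact: (subsetP sC'H).
  by case: (rcoset_repr_mem sC'H (tauB _ (CqR q qH))).
- move=> q q' qH q'H e.
  have eC : C :* q = C :* q'.
    by apply: tauI; rewrite ?CqR // -!LC' // e.
  move: e; rewrite /L eC => /mulIg /conjg_inj /mulIg //.
- move=> c cC q qH; rewrite /L rcosetM (rcoset_id cC) mulgA.
  by rewrite -(mulgA c) conjMg.
Qed.

End Lambda.

Section Iota.
Variables (gT : finGroupType) (H : {group gT}).
Local Open Scope group_scope.
Local Notation dc := (dc H).
Local Notation rrep := (rrep H).

Lemma rows_card x : (#|[set rrep d | d in dc x]| * #|H| <= #|dc x|)%N.
Proof.
set Rows := [set rrep d | d in dc x].
have rowK r : r \in Rows -> rrep r = r by case/imsetP=> d _ ->; apply: rrepK.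
have rowD r : r \in Rows -> r \in dc x by case/imsetP=> d dD ->; apply: rrep_dc.
rewrite -cardsX -(card_in_imset (f := fun p : gT * gT => p.2 * p.1)).
  apply: subset_leq_card; apply/subsetP=> _ /imsetP[[r h] /setXP[rS hH] ->] /=.
  by rewrite dcL ?rowD.
move=> [r h] [r' h'] /setXP[rS hH] /setXP[r'S h'H] /= e.
have err : r = r'.
  by rewrite -(rowK r rS) -(rowK r' r'S) -(rrepM _ hH) e (rrepM _ h'H).
by move: e; rewrite err => /mulIg ->.
Qed.

Lemma dc_card z : (#|dc z| <= #|H| * #|H : (H :&: H :^ z^-1)%G|)%N.
Proof.
pose K := (H :^ z^-1)%G.
have le1 : #|dc z| <= #|H * K|.
  have sub : [set t * z^-1 | t in dc z] \subset H * K.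
    apply/subsetP=> u /imsetP[t tD ->].
    case/mem_dc: tD => a [b /andP[aH bH] ->].
    apply/mulsgP; exists a (b ^ z^-1); rewrite ?memJ_conjg //.
    by rewrite conjgE invgK !mulgA.
  have := subset_leq_card sub; rewrite card_in_imset //.
  by move=> t t' _ _ /mulIg.
have := mul_cardG H K; rewrite /= cardJg.
have := Lagrange (subsetIl H K) => /= e1.
move=> e2; apply: leq_trans le1 _.
have Cpos := cardG_gt0 (H :&: K)%G.
rewrite -(@leq_pmul2r #|H :&: K|) //= -e2.
by rewrite -mulnA [X in (_ <= _ * X)%N]mulnC e1.
Qed.

Lemma iota_ex (x z : gT) : #|dc x| <= #|dc z| -> exists io : gT -> gT,
  {in [set rrep d | d in dc x], forall r, io r \in H} /\
  {in [set rrep d | d in dc x] &, forall r r',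
     (H :&: H :^ z^-1) :* io r = (H :&: H :^ z^-1) :* io r' -> r = r'}.
Proof.
move=> le; pose C := (H :&: H :^ z^-1)%G.
have idx : #|[set rrep d | d in dc x]| <= #|rcosets C H|.
  rewrite -(@leq_pmul2r #|H|) ?cardG_gt0 //.
  apply: leq_trans (rows_card x) (leq_trans le _).
  by rewrite mulnC; apply: dc_card.
have [tau [tauB tauI]] := inj_of_card set0 idx.
exists (fun r => repr (tau r)); split.
  by move=> r rR; case: (rcoset_repr_mem (subsetIl H _ : C \subset H) (tauB r rR)).
move=> r r' rR r'R e; apply: tauI => //.
case: (rcoset_repr_mem (subsetIl H _ : C \subset H) (tauB r rR)) => _ <- _.
by case: (rcoset_repr_mem (subsetIl H _ : C \subset H) (tauB r' r'R)) => _ <- _.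
Qed.

End Iota.

Section Assembly.
Variables (gT : finGroupType) (G H : {group gT}) (phi psi : {set gT} -> {set gT}).
Variable f0 : gT -> gT.
Local Open Scope group_scope.
Hypotheses (sHG : H \subset G) (f0H : {in H, forall x, f0 x \in H})
  (f0I : {in H &, injective f0}) (f0C : {in H &, injective (fun x => x * f0 x)}).
Local Notation DC := (double_cosets H G).
Hypotheses (phiP : is_perm_on DC phi) (psiP : is_perm_on DC psi).
Local Notation Rows D := [set rrep H d | d in D].
Local Notation Cols E := [set crep H e | e in E].
Local Notation CC F := (H :&: H :^ (repr F)^-1).
Variables (sg io Lam : {set gT} -> gT -> gT) (dec : {set gT} -> gT -> gT * gT).
Hypothesis sgP : forall D, D \in DC ->
  {in Rows D, forall r, sg D r \in Cols (phi D) /\ r * sg D r \in psi D} /\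
  {in Rows D &, injective (sg D)}.
Hypothesis ioP : forall D, D \in DC ->
  {in Rows D, forall r, io D r \in H} /\
  {in Rows D &, forall r r', CC (psi D) :* io D r = CC (psi D) :* io D r' -> r = r'}.
Hypothesis LamP : forall F, F \in DC ->
  [/\ {in H, forall q, Lam F q \in H}, {in H &, injective (Lam F)} &
      {in CC F, forall c, {in H, forall q, Lam F (c * q) = c ^ (repr F) * Lam F q}}].
Hypothesis decP : forall F w, F \in DC -> w \in F ->
  [/\ (dec F w).1 \in H, (dec F w).2 \in H & w = (dec F w).1 * repr F * (dec F w).2].

Lemma DC_dc x : x \in G -> dc H x \in DC.
Proof. by move=> xG; apply: imset_f. Qed.

Lemma DC_eq X x : X \in DC -> x \in X -> X = dc H x.
Proof. by case/imsetP=> y _ -> xX; rewrite (dc_eq xX). Qed.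

Lemma DC_sub X : X \in DC -> X \subset G.
Proof.
case/imsetP=> y yG ->; apply/subsetP=> t /mem_dc[a [b /andP[aH bH] ->]].
by rewrite !groupM // (subsetP sHG).
Qed.

Lemma DC_repr F : F \in DC -> F = dc H (repr F).
Proof.
move=> FDC; have rF : repr F \in F.
  by case/imsetP: FDC => y _ ->; apply: (mem_repr y); apply: dc_refl.
exact: DC_eq.
Qed.

Definition ff (d : gT) : gT :=
  let D := dc H d in let F := psi D in let r := rrep H d in
  let s := sg D r in let p := dec F (r * s) in
  s * (p.2)^-1 * Lam F (io D r * f0 (d * r^-1 * p.1 * io D r)).

Lemma DC_disj X Y t : X \in DC -> Y \in DC -> t \in X -> t \in Y -> X = Y.
Proof. by move=> XDC YDC tX tY; rewrite (DC_eq XDC tX) (DC_eq YDC tY). Qed.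

Lemma cols_sub E : E \in DC -> Cols E \subset E.
Proof.
move=> EDC; apply/subsetP=> _ /imsetP[e eE ->].
by rewrite (DC_eq EDC eE) crep_dc // dc_refl.
Qed.

Lemma reprF F : F \in DC -> repr F \in F.
Proof. by move=> FDC; rewrite {2}(DC_repr FDC) dc_refl. Qed.

Lemma ff_data d : d \in G ->
  let D := dc H d in let F := psi D in let r := rrep H d in let s := sg D r in
  let p := dec F (r * s) in let e := io D r in
  let X := e * f0 (d * r^-1 * p.1 * e) in
  [/\ [/\ D \in DC, phi D \in DC, F \in DC & r \in Rows D],
      s \in Cols (phi D),
      [/\ r * s \in F, p.1 \in H, p.2 \in H & r * s = p.1 * repr F * p.2],
      e \in H & [/\ X \in H, d * r^-1 \in H & ff d = s * p.2^-1 * Lam F X]].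
Proof.
move=> dG D F r s p e X.
have DDC : D \in DC by apply: DC_dc.
have EDC : phi D \in DC by apply: phiP.1.
have FDC : F \in DC by apply: psiP.1.
have rR : r \in Rows D by apply: imset_f; apply: dc_refl.
have [/(_ r rR) [sC rsF] _] := sgP DDC.
have [p1H p2H rsE] := decP FDC rsF.
have eH : e \in H by have [/(_ r rR) ? _] := ioP DDC.
have hH : d * r^-1 \in H by apply: rrep_H.
split=> //; split=> //.
rewrite /X; apply: groupM => //; apply: f0H; apply: groupM => //; exact: groupM.
Qed.

Lemma lcoset_dc E s t : E \in DC -> s \in E -> t \in s *: H -> t \in E.
Proof.
move=> EDC sE /lcosetP[h hH ->]; rewrite (DC_eq EDC sE); apply: dcR => //.
exact: dc_refl.
Qed.

Lemma crep_cols (E : {set gT}) s : s \in Cols E -> crep H s = s.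
Proof. by case/imsetP=> e _ ->; apply: crepK. Qed.

Lemma alg_id (d r s p1 p2 z L : gT) :
  r * s = p1 * z * p2 -> d * (s * p2^-1 * L) = d * r^-1 * p1 * z * L.
Proof.
move=> e; have -> : s = r^-1 * (p1 * z * p2) by rewrite -e mulKg.
by rewrite !mulgA mulgK.
Qed.

Lemma alg2 (P P' z a b : gT) :
  P * z * a = P' * z * b -> z^-1 * (P'^-1 * P) * z = b * a^-1.
Proof.
move=> e; have -> : P = P' * z * b * a^-1 * z^-1 by rewrite -e !mulgK.
by rewrite !mulgA mulgKV mulgKV mulVg mul1g.
Qed.

Lemma core_inj (z P P' e e' : gT) (L : gT -> gT) :
  P \in H -> P' \in H -> e \in H -> e' \in H ->
  {in H, forall q, L q \in H} -> {in H &, injective L} ->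
  {in H :&: H :^ z^-1, forall c, {in H, forall q, L (c * q) = c ^ z * L q}} ->
  P * z * L (e * f0 (P * e)) = P' * z * L (e' * f0 (P' * e')) ->
  (H :&: H :^ z^-1) :* e = (H :&: H :^ z^-1) :* e' /\ P * e = P' * e'.
Proof.
move=> PH P'H eH e'H LH LI LT eqp.
set X := e * f0 (P * e) in eqp; set X' := e' * f0 (P' * e') in eqp.
have XH : X \in H by rewrite groupM // f0H // groupM.
have X'H : X' \in H by rewrite groupM // f0H // groupM.
have ecz := alg2 eqp.
have cH : P'^-1 * P \in H by rewrite groupM ?groupV.
have cC : P'^-1 * P \in H :&: H :^ z^-1.
  by rewrite inE cH mem_conjgV conjgE mulgA ecz groupM ?groupV ?LH.
have cX : (P'^-1 * P) * X = X'.
  apply: LI; [by rewrite groupM | by [] | ]; by rewrite LT // conjgE mulgA ecz mulgKV.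
have ePe : P * e = P' * e'.
  apply: f0C; rewrite ?groupM //.
  by rewrite -!mulgA -/X -/X' -cX -mulgA mulKVg.
split=> //.
have -> : e' = (P'^-1 * P) * e by rewrite -mulgA ePe mulKg.
by rewrite rcosetM (rcoset_id cC).
Qed.

Lemma ff_main : [/\ {in G, forall x, ff x \in G}, {in G &, injective ff} &
                   {in G &, injective (fun x => x * ff x)}].
Proof.
split.
- move=> d dG; move: (ff_data dG) => /= [[DDC EDC FDC rR] sC [rsF p1H p2H rsE] eH [XH hH ->]].
  have [LH _ _] := LamP FDC.
  apply: groupM; first apply: groupM.
  + exact: (subsetP (DC_sub EDC)) (subsetP (cols_sub EDC) _ sC).
  + by rewrite groupV (subsetP sHG).
  + by apply: (subsetP sHG); apply: LH.
- move=> d d' dG d'G eqf.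
  move: (ff_data dG) (ff_data d'G) => /=.
  move=> [[DDC EDC FDC rR] sC [rsF p1H p2H rsE] eH [XH hH fd]].
  move=> [[DDC' EDC' FDC' rR'] sC' [rsF' p1H' p2H' rsE'] eH' [XH' hH' fd']].
  have inS : ff d \in sg (dc H d) (rrep H d) *: H.
    have [LH _ _] := LamP FDC.
    by rewrite fd -mulgA mem_lcoset mulKg; apply: groupM; [rewrite groupV | apply: LH].
  have inS' : ff d' \in sg (dc H d') (rrep H d') *: H.
    have [LH _ _] := LamP FDC'.
    by rewrite fd' -mulgA mem_lcoset mulKg; apply: groupM; [rewrite groupV | apply: LH].
  have eqD : dc H d = dc H d'.
    apply: (phiP.2) => //; apply: (DC_disj EDC EDC' (t := ff d)).
      exact: lcoset_dc (subsetP (cols_sub EDC) _ sC) inS.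
    by rewrite eqf; exact: lcoset_dc (subsetP (cols_sub EDC') _ sC') inS'.
  move: inS' sC' rR' fd' XH' eH' p1H' p2H' hH' rsE' rsF'; rewrite -eqD.
  move=> inS' sC' rR' fd' XH' eH' p1H' p2H' hH' rsE' rsF'.
  have eqs : sg (dc H d) (rrep H d) = sg (dc H d) (rrep H d').
    rewrite -(crep_cols sC) -(crep_cols sC') /crep.
    move/lcoset_eqP: inS => <-; move/lcoset_eqP: inS' => <-.
    by rewrite eqf.
  have eqr : rrep H d = rrep H d' by apply: (sgP DDC).2.
  move: XH' fd'; rewrite -eqr => XH' fd'.
  have [_ LI _] := LamP FDC.
  move: eqf; rewrite fd fd' => /mulgI /LI -/(_ XH XH') /mulgI /f0I.
  have aH : forall t, t \in G -> t * (rrep H d)^-1 \in H ->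
     t * (rrep H d)^-1 * (dec (psi (dc H d)) (rrep H d * sg (dc H d) (rrep H d))).1 *
       io (dc H d) (rrep H d) \in H.
    by move=> t _ tH; rewrite groupM // groupM.
  have hH'' : d' * (rrep H d)^-1 \in H by rewrite eqr.
  move/(_ (aH d dG hH) (aH d' d'G hH'')).
  by move/mulIg/mulIg/mulIg.
move=> d d' dG d'G /= eqp.
move: (ff_data dG) (ff_data d'G) => /=.
move=> [[DDC EDC FDC rR] sC [rsF p1H p2H rsE] eH [XH hH fd]].
move=> [[DDC' EDC' FDC' rR'] sC' [rsF' p1H' p2H' rsE'] eH' [XH' hH' fd']].
move: eqp; rewrite fd fd' (alg_id _ _ rsE) (alg_id _ _ rsE') => eqp.
have [LH LI LT] := LamP FDC.
have [LH' _ _] := LamP FDC'.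
have inF : forall F P L, F \in DC -> P \in H -> L \in H -> P * repr F * L \in F.
  move=> F P L FD PH LH0; rewrite {2}(DC_repr FD); apply/mem_dc.
  by exists P; exists L; rewrite ?PH ?LH0.
have eqD : dc H d = dc H d'.
  apply: (psiP.2) => //; apply: (DC_disj FDC FDC' (t := d * ff d)).
    by rewrite fd (alg_id _ _ rsE); apply: inF => //; [exact: groupM | exact: LH].
  by rewrite fd (alg_id _ _ rsE) eqp; apply: inF => //; [exact: groupM | exact: LH'].
move: eqp XH' eH' p1H' hH' rR'; rewrite -eqD => eqp XH' eH' p1H' hH' rR'.
have [eqC ePe] := core_inj (groupM hH p1H) (groupM hH' p1H') eH eH' LH LI LT eqp.
have eqr : rrep H d = rrep H d' by apply: (ioP DDC).2.
move: ePe; rewrite -eqr => /mulIg /mulIg /mulIg //.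
Qed.

End Assembly.

Unset Implicit Arguments.
Local Open Scope group_scope.

Theorem corollary3p3 (gT : finGroupType) (G H : {group gT})
  (phi psi : {set gT} -> {set gT}) :
  H \subset G ->
  has_complete_mapping H ->
  is_perm_on (double_cosets H G) phi ->
  is_perm_on (double_cosets H G) psi ->
  (forall D, D \in double_cosets H G ->
     [/\ #|D| = #|phi D|, #|D| = #|psi D| & psi D \subset D * phi D]) ->
  has_complete_mapping G.
Proof.
move=> sHG [f0 [f0H f0I f0C]] phiP psiP hD.
have dcE : forall D, D \in double_cosets H G -> exists2 x, x \in G & D = dc H x.
  by move=> D /imsetP[x xG ->]; exists x.
pose specS (D : {set gT}) (s : gT -> gT) :=
  {in [set rrep H d | d in D], forall r,
     s r \in [set crep H e | e in phi D] /\ r * s r \in psi D} /\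
  {in [set rrep H d | d in D] &, injective s}.
have sgP : forall D, D \in double_cosets H G ->
    specS D (epsilon (inhabits id) (specS D)).
  move=> D DDC; apply: epsilon_spec.
  have [cDE cDF sF] := hD D DDC.
  have EDC : phi D \in double_cosets H G by apply: phiP.1.
  have FDC : psi D \in double_cosets H G by apply: psiP.1.
  have [x xG eD] := dcE D DDC.
  have eE := DC_repr EDC; have eF := DC_repr FDC.
  have [s [sP sI]] := @local_match gT H x (repr (phi D)) (repr (psi D))
    ltac:(by rewrite -eD -eE) ltac:(by rewrite -eD -eE -eF).
  exists s; split.
    move=> r rR; have : r \in [set rrep H d | d in dc H x] by rewrite -eD.
    by move/sP; rewrite -eE -eF inE => /andP[].
  by move=> r r' rR r'R; apply: sI; rewrite -eD.
pose specI (D : {set gT}) (io : gT -> gT) :=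
  {in [set rrep H d | d in D], forall r, io r \in H} /\
  {in [set rrep H d | d in D] &, forall r r',
     (H :&: H :^ (repr (psi D))^-1) :* io r = (H :&: H :^ (repr (psi D))^-1) :* io r' ->
     r = r'}.
have ioP : forall D, D \in double_cosets H G ->
    specI D (epsilon (inhabits id) (specI D)).
  move=> D DDC; apply: epsilon_spec.
  have [cDE cDF sF] := hD D DDC.
  have FDC : psi D \in double_cosets H G by apply: psiP.1.
  have [x xG eD] := dcE D DDC.
  have eF := DC_repr FDC.
  have [io [ioH ioI]] := @iota_ex gT H x (repr (psi D)) ltac:(by rewrite -eD -eF cDF).
  exists io; split.
    by move=> r rR; apply: ioH; rewrite -eD.
  by move=> r r' rR r'R e; apply: ioI; rewrite -?eD // -eF.
pose specL (F : {set gT}) (L : gT -> gT) :=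
  [/\ {in H, forall q, L q \in H}, {in H &, injective L} &
      {in H :&: H :^ (repr F)^-1, forall c, {in H, forall q, L (c * q) = c ^ (repr F) * L q}}].
have LamP : forall F, F \in double_cosets H G ->
    specL F (epsilon (inhabits id) (specL F)).
  by move=> F _; apply: epsilon_spec; apply: Lambda_ex.
pose specD (F : {set gT}) (w : gT) (p : gT * gT) :=
  [/\ p.1 \in H, p.2 \in H & w = p.1 * repr F * p.2].
have decP : forall F w, F \in double_cosets H G -> w \in F ->
    specD F w (epsilon (inhabits (1, 1)) (specD F w)).
  move=> F w FDC wF; apply: epsilon_spec.
  have : w \in dc H (repr F) by rewrite -(DC_repr FDC).
  by case/mem_dc=> a [b /andP[aH bH] ->]; exists (a, b).
have [fG fI fC] := ff_main sHG f0H f0I f0C phiP psiP sgP ioP LamP decP.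
by eexists; split; [exact: fG | exact: fI | exact: fC].
Qed.
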